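(* Let $\Sigma,\Gamma$ be finite alphabets, $w\in\Sigma^{\mathbb{N}}$ an infinite word and $h:\Sigma^*\to\Gamma^*$ an injective morphism. If there exists a nonempty word $x$ such that $x^l$ is a factor of $h(w)$ for every $l\in\mathbb{N}$, then $\mathrm{ACE}(w) = \infty$.
   Context: $\mathrm{Fact}_n(w)$ is the set of length-$n$ factors of $w$. For a nonempty word $v$ and integer $p\ge0$, $v^{p/|v|}$ is the prefix of length $p$ of $vvv\cdots$. For a nonempty finite word $u$, $\mathrm{E}(u) = \sup\{ r \in \mathbb{Q} : u = v^r \text{ for some nonempty } v\}$. For an infinite word $w$, $\mathrm{ACE}(w) = \limsup_{n\to\infty}\sup\{\mathrm{E}(u) : u\in\mathrm{Fact}_n(w)\}$. *)

(* Defs.v *)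
From mathcomp Require Import all_boot all_order all_algebra.
From mathcomp Require Import all_classical all_reals all_analysis.
Set Implicit Arguments. Unset Strict Implicit. Unset Printing Implicit Defensive.
Import Order.TTheory GRing.Theory Num.Theory.
Local Open Scope classical_set_scope.
Local Open Scope ring_scope.

(* v^{p/|v|}: the prefix of length p of v v v ... *)
Definition wpow {T : Type} (x0 : T) (v : seq T) (p : nat) : seq T :=
  mkseq (fun i => nth x0 v (i %% size v)) p.

(* E(u) = sup { r in Q : u = v^r for some nonempty v }, as an extended real.
   u = v^r with r = p/|v| (p a natural number). *)
Definition Eexp (R : realType) {T : eqType} (u : seq T) : \bar R :=
  ereal_sup [set r : \bar R | exists (p : nat) (v : seq T) (x0 : T),
     v != [::] /\ u = wpow x0 v p /\ r = ((p%:R / (size v)%:R : R)%:E)].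

Definition Fact {T : Type} (w : nat -> T) (n : nat) : set (seq T) :=
  [set u | exists i, u = mkseq (fun j => w (i + j)) n].

Definition ACE (R : realType) {T : eqType} (w : nat -> T) : \bar R :=
  limn_esup (fun n => ereal_sup [set Eexp R u | u in Fact w n]).

Definition morph {S G : Type} (h : S -> seq G) (s : seq S) : seq G :=
  flatten (map h s).

(* x is a factor of the infinite word h(w) (the concatenation h(w0) h(w1) ...):
   equivalently, x occurs in h(w0 ... w_{n-1}) for some n. *)
Definition factor_of_image {S G : eqType} (h : S -> seq G) (w : nat -> S)
  (x : seq G) : Prop :=
  exists n, infix x (morph h (mkseq w n)).

Definition wrep {T : Type} (x : seq T) (l : nat) : seq T := flatten (nseq l x).

(* Main.v *)
Require Import Defs.
From mathcomp Require Import all_boot all_order all_algebra.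
From mathcomp Require Import all_classical all_reals all_analysis.
From mathcomp Require Import zify.
Set Implicit Arguments. Unset Strict Implicit. Unset Printing Implicit Defensive.


Section Words.
Variable T : Type.
Implicit Types (s t u v : seq T).

Lemma catIs s t1 t2 : s ++ t1 = s ++ t2 -> t1 = t2.
Proof. by elim: s => //= a s IH [] /IH. Qed.

Lemma wrepS t n : wrep t n.+1 = t ++ wrep t n.
Proof. by []. Qed.

Lemma wrepD t m n : wrep t (m + n) = wrep t m ++ wrep t n.
Proof. by elim: m => //= m IH; rewrite addSn !wrepS IH catA. Qed.

Lemma size_wrep t n : size (wrep t n) = n * size t.
Proof. by elim: n => //= n IH; rewrite wrepS size_cat IH mulSn. Qed.

Lemma nth_wrep d t n i : i < n * size t ->
  nth d (wrep t n) i = nth d t (i %% size t).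
Proof.
elim: n i => [|n IH] i; first by rewrite mul0n.
rewrite wrepS nth_cat mulSn => hi.
case: ltnP => hit; first by rewrite modn_small.
rewrite IH; last by rewrite ltn_subLR.
by rewrite -{2}(subnK hit) modnDr.
Qed.

Lemma wpow_wrep d t n : wpow d t (n * size t) = wrep t n.
Proof.
apply: (@eq_from_nth _ d); first by rewrite size_mkseq size_wrep.
move=> i; rewrite size_mkseq => hi.
by rewrite nth_mkseq // nth_wrep.
Qed.

Lemma comm_root u v : u ++ v = v ++ u ->
  exists t m n, u = wrep t m /\ v = wrep t n.
Proof.
move: {2}(size u + size v) (leqnn (size u + size v)) => k.
elim: k u v => [|k IH] u v.
  by case: u => //; case: v => // _ _; exists [::], 0, 0.
wlog le_uv : u v / size u <= size v.
  move=> H; case: (leqP (size u) (size v)) => [le|/ltnW le]; first exact: H.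
  move=> hs e; have := H v u le; rewrite addnC => /(_ hs (esym e)) [t [m [n [-> ->]]]].
  by exists t, n, m.
case: u le_uv => [|a u'] le_uv hs e.
  by exists v, 0, 1; rewrite /wrep /= cats0.
set u := a :: u' in le_uv hs e *.
have hu : take (size u) v = u.
  by have := congr1 (take (size u)) e; rewrite take_size_cat // takel_cat.
set v' := drop (size u) v.
have ev : v = u ++ v' by rewrite -{1}(cat_take_drop (size u) v) hu.
have e' : u ++ v' = v' ++ u.
  by apply: (@catIs u); rewrite -ev catA -ev.
have hs' : size u + size v' <= k.
  by move: hs; rewrite ev size_cat /= !addSn ltnS; apply: leq_trans; rewrite leq_addl.
have [t [m [n [Hu Hv]]]] := IH u v' hs' e'.
by exists t, m, (m + n); rewrite ev Hu Hv wrepD.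
Qed.
End Words.


Section Align.
Variables (G : Type) (d : G) (x : seq G).
Definition aligned (r : nat) (s : seq G) :=
  size s %% size x = 0 /\
  forall i, i < size s -> nth d s i = nth d x ((r + i) %% size x).

Lemma aligned_cat r s1 s2 : aligned r s1 -> aligned r s2 -> aligned r (s1 ++ s2).
Proof.
move=> [h1 n1] [h2 n2]; split; first by rewrite size_cat -modnDm h1 h2 mod0n.
move=> i; rewrite size_cat nth_cat; case: (ltnP i (size s1)) => hi; first by move=> _; apply: n1.
move=> hi2; rewrite n2; last by rewrite ltn_subLR.
have /dvdnP [k hk] : size x %| size s1 by apply/eqP; rewrite -/(dvdn _ _) /dvdn h1.
have -> : r + i = k * size x + (r + (i - size s1)) by rewrite -hk; lia.
by rewrite modnMDl.
Qed.

Lemma aligned_eq r s1 s2 : aligned r s1 -> aligned r s2 -> size s1 = size s2 -> s1 = s2.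
Proof.
move=> [_ n1] [_ n2] e; apply: (eq_from_nth (x0:=d) e) => i hi.
by rewrite n1 // n2 // -e.
Qed.
End Align.

Lemma pigeon (q : nat) (f : nat -> nat) : (forall i, f i < q) ->
  exists i i', [/\ i < i', i' <= q & f i = f i'].
Proof.
move=> hf.
case E: [exists i : 'I_q.+1, exists i' : 'I_q.+1, (i < i') && (f i == f i')].
  move/existsP: E => [i /existsP [i' /andP [lt /eqP e]]].
  by exists i, i'; split => //; rewrite -ltnS.
pose F (i : 'I_q.+1) : 'I_q := Ordinal (hf i).
have injF : injective F.
  move=> i i' e0; have e : f i = f i' := congr1 val e0.
  apply: val_inj; apply/eqP; case: (ltngtP (val i) (val i')) => // lt.
    by exfalso; move: E => /negbT /negP; apply; apply/existsP; exists i; apply/existsP; exists i'; rewrite lt e eqxx.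
  by exfalso; move: E => /negbT /negP; apply; apply/existsP; exists i'; apply/existsP; exists i; rewrite lt e eqxx.
by have := leq_card F injF; rewrite !card_ord ltnn.
Qed.


Lemma mkseqD (T : Type) (f : nat -> T) a b :
  mkseq f (a + b) = mkseq f a ++ mkseq (fun d => f (a + d)) b.
Proof.
rewrite /mkseq iotaD map_cat add0n; congr (_ ++ _).
by rewrite -[in iota a b](addn0 a) iotaDl -map_comp.
Qed.

Section Morph.
Variables (Sigma Gamma : finType) (w : nat -> Sigma) (h : Sigma -> seq Gamma).
Hypothesis hinj : injective (morph h).

Definition seg i k := mkseq (fun d => w (i + d)) k.
Definition cc j := size (morph h (mkseq w j)).

Lemma morph_cat s t : morph h (s ++ t) = morph h s ++ morph h t.
Proof. by rewrite /morph map_cat flatten_cat. Qed.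

Lemma morph_split j k :
  morph h (mkseq w (j + k)) = morph h (mkseq w j) ++ morph h (seg j k).
Proof. by rewrite mkseqD morph_cat. Qed.

Lemma cc_split j k : cc (j + k) = cc j + size (morph h (seg j k)).
Proof. by rewrite /cc morph_split size_cat. Qed.

Lemma h_ne a : h a != [::].
Proof.
apply/eqP => e.
have : morph h [:: a] = morph h [:: a; a] by rewrite /morph /= e.
by move/hinj.
Qed.

Definition Lm := \max_(a : Sigma) size (h a).

Lemma ccS j : cc j.+1 = cc j + size (h (w j)).
Proof. by rewrite -addn1 cc_split /seg /mkseq /= /morph /= addn0 cats0. Qed.

Lemma hsize a : 0 < size (h a) <= Lm.
Proof. by rewrite lt0n size_eq0 h_ne leq_bigmax. Qed.

Lemma cc_grow j k : cc j + k <= cc (j + k) <= cc j + k * Lm.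
Proof.
elim: k => [|k IH]; first by rewrite mul0n !addn0 leqnn.
rewrite !addnS ccS; have /andP [h1 h2] := hsize (w (j + k)).
move/andP: IH => [i1 i2]; apply/andP; split; lia.
Qed.

Lemma cc_lt j j' : j < j' -> cc j < cc j'.
Proof.
move=> lt; have := cc_grow j (j' - j); rewrite subnKC ?(ltnW lt) //.
move=> /andP [h1 _]; apply: leq_trans h1; rewrite -addn1 leq_add2l subn_gt0 //.
Qed.

Lemma cc_mono j j' : j <= j' -> cc j <= cc j'.
Proof.
move=> le; have := cc_grow j (j' - j); rewrite subnKC //.
by move=> /andP [h1 _]; apply: leq_trans h1; rewrite leq_addr.
Qed.

Lemma cc_start o N : o <= cc N -> exists j, o <= cc j <= o + Lm.
Proof.
elim: N => [|N IH].
  by rewrite /cc /= leqn0 => /eqP ->; exists 0; rewrite /cc /=.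
case: (leqP o (cc N)) => [/IH //|lt hN].
exists N.+1; rewrite ccS in hN *; have /andP [h1 h2] := hsize (w N); lia.
Qed.
End Morph.


Section Key.
Variables (Sigma Gamma : finType) (w : nat -> Sigma) (h : Sigma -> seq Gamma).
Hypothesis hinj : injective (morph h).

Lemma key (x : seq Gamma) M : x != [::] ->
  (forall l, factor_of_image h w (wrep x l)) -> 0 < M ->
  exists i (t : seq Sigma) n,
    [/\ t != [::], size t <= size x, M <= n * size t & seg w i (n * size t) = wrep t n].
Proof.
move=> xne hfac M0.
have d : Gamma by destruct x as [|a s]; [by [] | exact a].
set q := size x; have q0 : 0 < q by rewrite lt0n size_eq0.
set X := M * q.+1.
set K := q * X + q.
set L := Lm h.
have L1 : 1 <= L by have /andP [h1 h2] := hsize hinj (w 0); apply: leq_trans h2.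
set l := L * K.+1.
have [n0 /infixP [s1 [s2 eH]]] := hfac l.
set o := size s1.
have ccn0 : cc w h n0 = o + l * q + size s2 by rewrite /cc eH !size_cat size_wrep addnA.
have nthH : forall i, i < l * q -> nth d (morph h (mkseq w n0)) (o + i) = nth d x (i %% q).
  move=> i hi; rewrite eH nth_cat ltnNge leq_addr /= addKn nth_cat size_wrep hi.
  by rewrite nth_wrep.
have [j0 /andP [hj0a hj0b]] : exists j, o <= cc w h j <= o + L.
  by apply: (cc_start hinj (N := n0)); rewrite ccn0 -addnA leq_addr.
have lq : l <= l * q by rewrite leq_pmulr.
have lK : l = K * L + L by rewrite /l mulnS addnC mulnC.
have bound : forall j, j0 <= j -> j <= j0 + K -> o <= cc w h j <= o + l * q.
  move=> j a b; apply/andP; split.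
    by apply: (leq_trans hj0a); apply: cc_mono.
  have /andP [_ g1] := cc_grow w hinj j0 K.
  have g2 := cc_mono w hinj b.
  lia.
have jn : forall j, cc w h j <= o + l * q -> j <= n0.
  move=> j hj; rewrite leqNgt; apply/negP => /(cc_lt w hinj); lia.
have align : forall j k, j0 <= j -> j + k <= j0 + K ->
    (cc w h (j + k) - o) %% q = (cc w h j - o) %% q ->
    aligned d x ((cc w h j - o) %% q) (morph h (seg w j k)).
  move=> j k a b e.
  have /andP [ho1 ho2] := bound j a (leq_trans (leq_addr _ _) b).
  have /andP [ho3 ho4] := bound (j + k) (leq_trans a (leq_addr _ _)) b.
  have jkn := jn _ ho4.
  have eH2 : morph h (mkseq w n0) = morph h (mkseq w j) ++ morph h (seg w j k) ++
      morph h (seg w (j + k) (n0 - (j + k))).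
    by rewrite -{1}(subnKC jkn) !morph_split catA.
  have sz : size (morph h (seg w j k)) = cc w h (j + k) - cc w h j.
    by rewrite cc_split addKn.
  split.
    rewrite sz; apply/eqP; rewrite -/(dvdn _ _).
    have := eqn_mod_dvd q (_ : cc w h j - o <= cc w h (j + k) - o).
    move=> /(_ (leq_sub2r _ (cc_mono w hinj (leq_addr _ _)))).
    rewrite e eqxx => /esym/dvdn_trans; apply.
    by rewrite subnBA // subnK // ?(leq_trans ho1) // cc_mono // leq_addr.
  move=> i hi.
  have -> : nth d (morph h (seg w j k)) i = nth d (morph h (mkseq w n0)) (cc w h j + i).
    by rewrite eH2 nth_cat /cc ltnNge leq_addr /= addKn nth_cat hi.
  rewrite modnDml.
  have -> : cc w h j + i = o + (cc w h j - o + i) by lia.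
  by rewrite nthH //; rewrite sz in hi; lia.
pose rho j := (cc w h j - o) %% q.
pose sb b := j0 + b * X.
have ex : forall b, exists p : nat * nat,
    [&& p.1 < p.2, p.2 <= q & rho (sb b + p.1) == rho (sb b + p.2)].
  move=> b.
  have [i [i' [h1 h2 h3]]] := pigeon (f := fun i => rho (sb b + i)) (fun i => ltn_pmod _ q0).
  by exists (i, i'); rewrite /= h1 h2 h3 eqxx.
pose g b := rho (sb b + (xchoose (ex b)).1).
have [a [a' [haa' ha'q hg]]] := pigeon (f := g) (fun b => ltn_pmod _ q0).
have /and3P [p1 p2 /eqP p3] := xchooseP (ex a).
have /and3P [p1' p2' _] := xchooseP (ex a').
move: hg; rewrite /g.
move: p1 p2 p3 p1' p2'.
move: (xchoose (ex a)) (xchoose (ex a')) => [P1 P2] [Q1 Q2] /= p1 p2 p3 p1' p2' hg.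
have sbaa : sb a + X <= sb a' by rewrite /sb -addnA leq_add2l addnC -mulSn leq_mul2r haa' orbT.
have sba' : sb a' <= j0 + q * X by rewrite /sb leq_add2l leq_mul2r ha'q orbT.
have XM : q + M <= X by rewrite /X mulnS addnC leq_add2l leq_pmull.
set j1 := sb a + P1; set j2 := sb a + P2; set j3 := sb a' + Q1.
have hj1 : j0 <= j1 by rewrite /j1 /sb -addnA leq_addr.
have AU : aligned d x (rho j1) (morph h (seg w j1 (j2 - j1))).
  by apply: align; rewrite ?subnKC //; rewrite /j1 /j2 /K in hj1 p3 *; lia.
have AZ : aligned d x (rho j1) (morph h (seg w j1 (j3 - j1))).
  by apply: align; rewrite ?subnKC //; rewrite /j1 /j3 /K in hj1 hg *; lia.
have e : seg w j1 (j2 - j1) ++ seg w j1 (j3 - j1) = seg w j1 (j3 - j1) ++ seg w j1 (j2 - j1).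
  apply: hinj; apply: (aligned_eq (r := rho j1)); rewrite ?morph_cat.
  - apply: aligned_cat; [exact: AU | exact: AZ].
  - apply: aligned_cat; [exact: AZ | exact: AU].
  - by rewrite !size_cat addnC.
have [t [m [n [hU hZ]]]] := comm_root e.
have sU : m * size t = j2 - j1 by rewrite -size_wrep -hU size_mkseq.
have sZ : n * size t = j3 - j1 by rewrite -size_wrep -hZ size_mkseq.
have tne : t != [::].
  apply/eqP => t0; move: sU; rewrite t0 /= muln0 /j1 /j2; lia.
have m1 : 0 < m by case: m sU {hU} => //; rewrite mul0n /j1 /j2; lia.
exists j1, t, n; split => //.
- apply: (leq_trans (leq_pmull _ m1)); rewrite sU /j1 /j2; lia.
- rewrite sZ /j1 /j3; lia.
- by rewrite sZ.
Qed.
End Key.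

Import Order.TTheory GRing.Theory Num.Theory.

Lemma Eexp_ge (R : realType) (T : eqType) (t : seq T) n : t != [::] ->
  ((n%:R : R)%:E <= Eexp R (wrep t n))%E.
Proof.
case: t => [|a s] // _.
apply: ereal_sup_ubound; exists (n * size (a :: s)), (a :: s), a.
split => //; split; first by rewrite wpow_wrep.
by rewrite natrM mulfK // pnatr_eq0.
Qed.

Lemma sup_pinfty (R : realType) (S : set (\bar R)) :
  (forall n : nat, exists2 y, S y & ((n%:R : R)%:E <= y)%E) -> ereal_sup S = +oo%E.
Proof.
move=> H.
have H' : forall n : nat, ((n%:R : R)%:E <= ereal_sup S)%E.
  move=> n; have [y Sy le] := H n; apply: (le_trans le); exact: ereal_sup_ubound.
case E: (ereal_sup S) => [r| |] //.
  have := H' (Num.Def.trunc r).+1; rewrite E lee_fin => le.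
  have := truncnS_gt r => lt.
  by have := lt_le_trans lt le; rewrite ltxx.
by have := H' 0; rewrite E.
Qed.

Unset Implicit Arguments.
Theorem lemma15 (R : realType) (Sigma Gamma : finType) (w : nat -> Sigma)
  (h : Sigma -> seq Gamma) :
  injective (morph h) ->
  (exists x : seq Gamma, x != [::] /\ forall l : nat, factor_of_image h w (wrep x l)) ->
  ACE R w = +oo%E.
Proof.
move=> hinj [x [xne hfac]].
set f := fun n => ereal_sup [set Eexp R u | u in Fact w n].
have big : forall N M' : nat, exists2 k, (N <= k)%N & ((M'%:R : R)%:E <= f k)%E.
  move=> N M'.
  have q0 : (0 < size x)%N by rewrite lt0n size_eq0.
  have [i [t [n [tne st hM hs]]]] :=
    key hinj (M := (size x * (M' + N)).+1) xne hfac isT.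
  have hn : (M' + N < n)%N.
    rewrite -(ltn_pmul2r q0) [X in (X < _)%N]mulnC; apply: (leq_trans hM).
    by rewrite leq_mul2l st orbT.
  exists (n * size t).
    apply: (leq_trans _ hM); have := leq_pmull (M' + N) q0; lia.
  apply: (le_trans (y := Eexp R (wrep t n))).
    apply: (le_trans _ (@Eexp_ge R _ t n tne)); rewrite lee_fin ler_nat; lia.
  apply: ereal_sup_ubound; exists (wrep t n) => //.
  by exists i; rewrite -hs.
rewrite /ACE limn_esup_lim -/f.
have -> : esups f = fun=> +oo%E.
  apply: funext => N; rewrite /esups /=; apply: sup_pinfty => M'.
  have [k Nk le] := big N M'; exists (f k) => //; by exists k.
exact: (lim_cst (@ereal_hausdorff R)).
Qed.
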